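(* Let $G$ be a finitely generated group whose growth function satisfies $\gamma_G(n)\succcurlyeq 2^{n^{\alpha}}$ for some $\alpha\in(0,1]$. Then $\mathrm{WP}_G\notin\mathrm{DTIME}_1(o(n^{1+\alpha}))$.
   Context: The growth function $\gamma_G(n)$ is the number of elements of word length at most $n$ with respect to a finite symmetric generating set. For nondecreasing functions, $f\succcurlyeq g$ means there is $C>0$ with $g(n)\le f(Cn)$ for all $n$. $\mathrm{WP}_G$ is the word problem $\{w\in S^{*}: w=_G e\}$; $\mathrm{DTIME}_1(o(t(n)))$ is the class of languages decided in time $o(t(n))$ by a deterministic single-tape Turing machine. *)

(* Defs.v *)
From HB Require Import structures.
From mathcomp Require Import all_boot.
From Stdlib Require Import Reals ZArith ClassicalEpsilon.

Set Implicit Arguments.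
Unset Strict Implicit.
Unset Printing Implicit Defensive.

Definition ceq (T : Type) (x y : T) : bool :=
  if excluded_middle_informative (x = y) then true else false.

Lemma ceqP (T : Type) : Equality.axiom (@ceq T).
Proof.
move=> x y; rewrite /ceq; case: excluded_middle_informative => h.
  by constructor.
by constructor.
Qed.

Definition classicT (T : Type) : Type := T.
HB.instance Definition _ (T : Type) := hasDecEq.Build (classicT T) (@ceqP T).

Record group_on (G : Type) := GroupOn {
  gmul : G -> G -> G;
  ginv : G -> G;
  gone : G;
  gmulA : forall x y z, gmul x (gmul y z) = gmul (gmul x y) z;
  gmul1 : forall x, gmul gone x = x;
  gmulV : forall x, gmul (ginv x) x = gone
}.

Definition geval (G : Type) (grp : group_on G) (k : nat) (s : 'I_k -> G)
  (w : seq 'I_k) : G :=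
  foldr (fun i acc => gmul grp (s i) acc) (gone grp) w.

Definition words_upto (k n : nat) : seq (seq 'I_k) :=
  flatten [seq [seq tval t | t : m.-tuple 'I_k] | m <- iota 0 n.+1].

Definition growth (G : Type) (grp : group_on G) (k : nat) (s : 'I_k -> G)
  (n : nat) : nat :=
  size (undup [seq (geval grp s w : classicT G) | w <- words_upto k n]).

Definition WP (G : Type) (grp : group_on G) (k : nat) (s : 'I_k -> G) :
  seq 'I_k -> Prop := fun w => geval grp s w = gone grp.

(* n^a for a natural n and a real exponent a > 0 (with 0^a = 0) *)
Definition npow (n : nat) (a : R) : R :=
  match n with 0 => 0%R | _ => Rpower (INR n) a end.

(* f(x) for real x >= 0, where f counts elements of length <= x *)
Definition at_real (f : nat -> nat) (x : R) : nat := f (Z.to_nat (Int_part x)).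

Definition dominates (f : nat -> nat) (g : nat -> R) : Prop :=
  exists C : R, (0 < C)%R /\ forall n : nat, (g n <= INR (at_real f (C * INR n)))%R.

Inductive move := MoveL | MoveR | MoveS.
Definition shift (m : move) : Z :=
  match m with MoveL => (-1)%Z | MoveR => 1%Z | MoveS => 0%Z end.

Record TM (Sigma : finType) := MkTM {
  state : finType;
  sym : finType;
  inp : Sigma -> sym;
  blank : sym;
  q0 : state;
  qacc : state;
  qrej : state;
  delta : state -> sym -> state * sym * move;
  inp_inj : injective inp;
  blank_notin : forall a, inp a <> blank;
  acc_rej : qacc <> qrej
}.

Record config (Sigma : finType) (M : TM Sigma) := Config {
  cstate : state M;
  ctape : Z -> sym M;
  chead : Z
}.

Definition halting (Sigma : finType) (M : TM Sigma) (q : state M) : bool :=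
  (q == @qacc _ M) || (q == @qrej _ M).

Definition step (Sigma : finType) (M : TM Sigma) (c : config M) : config M :=
  if halting (cstate c) then c else
  let: (q', a, m) := @delta _ M (cstate c) (ctape c (chead c)) in
  Config q' (fun i => if Z.eqb i (chead c) then a else ctape c i)
         (chead c + shift m)%Z.

Definition init (Sigma : finType) (M : TM Sigma) (w : seq Sigma) : config M :=
  @Config _ M (@q0 _ M)
    (fun i => if (Z.leb 0 i && Z.ltb i (Z.of_nat (size w)))%bool
              then nth (@blank _ M) (map (@inp _ M) w) (Z.to_nat i) else @blank _ M)
    0%Z.

Definition run (Sigma : finType) (M : TM Sigma) (w : seq Sigma) (t : nat) :
  config M := ssrnat.iter t (@step Sigma M) (init M w).

Definition halted_by (Sigma : finType) (M : TM Sigma) (w : seq Sigma) (t : nat) :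
  Prop := halting (cstate (run M w t)).

Definition decides (Sigma : finType) (M : TM Sigma) (L : seq Sigma -> Prop) :
  Prop :=
  forall w, (exists t, halted_by M w t) /\
    (forall t, halted_by M w t -> (cstate (run M w t) = @qacc _ M <-> L w)).

Definition time_little_o (Sigma : finType) (M : TM Sigma) (t : nat -> R) : Prop :=
  forall eps : R, (0 < eps)%R -> exists N0 : nat, forall w : seq Sigma,
    (N0 <= size w)%nat -> exists T : nat, (INR T <= eps * t (size w))%R /\ halted_by M w T.

Definition DTIME1_o (Sigma : finType) (L : seq Sigma -> Prop) (t : nat -> R) : Prop :=
  exists M : TM Sigma, decides M L /\ time_little_o M t.

(* Main.v *)
Require Import Defs.
From mathcomp Require Import all_boot.
From Stdlib Require Import Reals.
From Stdlib Require Import ZArith Lia Lra ClassicalEpsilon.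
From mathcomp Require Import zify ssrnat.

Open Scope R_scope.

Lemma ln_lt_self y : 0 < y -> ln y < y.
Proof.
move=> Hy; have := exp_ineq1_le (ln y); rewrite exp_ln //; lra.
Qed.

Lemma ln_le' x y : 0 < x -> x <= y -> ln x <= ln y.
Proof.
move=> Hx Hxy; case: (Rle_lt_or_eq_dec _ _ Hxy) => H.
  by apply: Rlt_le; apply: ln_increasing.
by rewrite H; apply: Rle_refl.
Qed.

Lemma Rpower_gt0 x a : 0 < Rpower x a.
Proof. exact: exp_pos. Qed.

Lemma Rpower4 y : 0 < y -> Rpower y 4 = y ^ 4.
Proof.
move=> Hy; rewrite -Rpower_pow //; f_equal; simpl; lra.
Qed.

Lemma eventually_big (a c K : R) : 0 < a -> 0 < c ->
  exists X, 1 <= X /\ forall x, X <= x -> 2 * ln (x + 1) + K < c * Rpower x a.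
Proof.
move=> Ha Hc.
set B := 2 * ln 2 + 8 / a + Rabs K + 1.
set A := Rmax 1 (B / c).
exists (Rmax 1 (Rpower A (4 / a))); split; first exact: Rmax_l.
move=> x Hx.
have Hx1 : 1 <= x by apply: Rle_trans (Rmax_l _ _) Hx.
have HA1 : 1 <= A by apply: Rmax_l.
set y := Rpower x (a / 4).
have Hy0 : 0 < y by apply: Rpower_gt0.
have HAy : A <= y.
  have H1 : Rpower (Rpower A (4 / a)) (a / 4) <= y.
    apply: Rle_Rpower_l; first lra.
    split; first exact: Rpower_gt0.
    exact: Rle_trans (Rmax_r _ _) Hx.
  rewrite Rpower_mult in H1.
  replace (4 / a * (a / 4)) with 1 in H1 by (field; lra).
  by rewrite Rpower_1 in H1; lra.
have Hy1 : 1 <= y by lra.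
have HBy : B <= c * y.
  have : B / c <= y by apply: Rle_trans (Rmax_r _ _) HAy.
  move=> H; apply (Rmult_le_compat_l c) in H; last lra.
  by replace (c * (B / c)) with B in H by (field; lra).
have Hxa : Rpower x a = y ^ 4.
  rewrite -Rpower4 // /y Rpower_mult; f_equal; field; lra.
have Hlny : ln y = a / 4 * ln x by rewrite /y ln_Rpower.
have Hlnx : ln x = 4 / a * ln y by rewrite Hlny; field; lra.
have Hln2 : ln (x + 1) <= ln 2 + ln x.
  rewrite -ln_mult; [apply: ln_le'|lra|lra]; lra.
have Hlt := ln_lt_self y Hy0.
have Hln2p : 0 < ln 2 by have := ln_lt_2; lra.
have H8 : 4 / a * ln y <= 4 / a * y.
  apply: Rmult_le_compat_l; [apply: Rlt_le; apply: Rdiv_lt_0_compat; lra | lra].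
have HK : K <= Rabs K by apply: Rle_abs.
have HK0 : 0 <= Rabs K by apply: Rabs_pos.
have Hy3 : y <= y ^ 3 by nra.
have Hby : B * y <= c * y ^ 4.
  have -> : c * y ^ 4 = (c * y) * y ^ 3 by ring.
  apply: Rle_trans (Rmult_le_compat_l B _ _ _ Hy3) _.
    rewrite /B; have : 0 <= 8 / a by apply: Rlt_le; apply: Rdiv_lt_0_compat; lra.
    lra.
  apply: Rmult_le_compat_r; first nra.
  exact: HBy.
rewrite Hxa.
have E : B * y = 2 * ln 2 * y + 8 / a * y + Rabs K * y + y by rewrite /B; ring.
have H8' : 8 / a * y = 2 * (4 / a * y) by field; lra.
nra.
Qed.

Close Scope R_scope.

Set Implicit Arguments.
Unset Strict Implicit.
Unset Printing Implicit Defensive.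



Definition agree (Sigma : finType) (M : TM Sigma) (P : Z -> bool) (x y : config M) :=
  forall i, P i -> ctape x i = ctape y i.

Lemma step_local (Sigma : finType) (M : TM Sigma) (P : Z -> bool) (c d : config M) :
  cstate c = cstate d -> chead c = chead d -> P (chead c) -> agree P c d ->
  cstate (step c) = cstate (step d) /\ chead (step c) = chead (step d) /\ agree P (step c) (step d).
Proof.
move=> Hs Hh HP Ha; rewrite /step -Hs.
case: (halting (cstate c)) => //.
have -> : ctape d (chead d) = ctape c (chead c) by rewrite -Hh Ha.
case: (delta (cstate c) (ctape c (chead c))) => [[q a] mv] /=.
split=> //; split; first by rewrite Hh.
move=> i Hi /=; rewrite Hh; case: (Z.eqb i (chead d)) => //; exact: Ha.
Qed.

Lemma step_off (Sigma : finType) (M : TM Sigma) (c : config M) i :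
  i <> chead c -> ctape (step c) i = ctape c i.
Proof.
move=> H; rewrite /step; case: (halting (cstate c)) => //.
case: (delta _ _) => [[q a] mv] /=.
by case: (Z.eqb_spec i (chead c)).
Qed.

Lemma step_head (Sigma : finType) (M : TM Sigma) (c : config M) :
  (chead c - 1 <= chead (step c) <= chead c + 1)%Z.
Proof.
rewrite /step; case: (halting (cstate c)); first lia.
case: (delta _ _) => [[q a] mv] /=; case: mv => /=; lia.
Qed.

Lemma step_halt (Sigma : finType) (M : TM Sigma) (c : config M) :
  halting (cstate c) -> step c = c.
Proof. by rewrite /step => ->. Qed.

Definition traj (Sigma : finType) (M : TM Sigma) (f : nat -> config M) :=
  forall t, f t.+1 = step (f t).

Lemma traj_run (Sigma : finType) (M : TM Sigma) w : traj (run M w).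
Proof. by []. Qed.

Lemma traj_halt (Sigma : finType) (M : TM Sigma) (f : nat -> config M) t t' :
  traj f -> halting (cstate (f t)) -> t <= t' -> f t' = f t.
Proof.
move=> Hf Hh; elim: t' => [|t' IH]; first by rewrite leqn0 => /eqP ->.
rewrite leq_eqVlt => /orP [/eqP <- //|Hlt].
by rewrite Hf IH // step_halt // -(IH Hlt).
Qed.

Definition side (Sigma : finType) (M : TM Sigma) (B : Z) (c : config M) : bool :=
  (chead c <? B)%Z.
Definition info (Sigma : finType) (M : TM Sigma) (B : Z) (c : config M) : state M * bool :=
  (cstate c, side B c).

Fixpoint csf (Sigma : finType) (M : TM Sigma) (f : nat -> config M) (B : Z) (t : nat) :
  seq (state M * bool) :=
  match t with
  | 0 => [::]
  | t'.+1 => csf f B t' ++ (if side B (f t') != side B (f t'.+1)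
                            then [:: info B (f t'.+1)] else [::])
  end.

Lemma csf_prefix (Sigma : finType) (M : TM Sigma) f B t t' :
  t <= t' -> @csf Sigma M f B t = take (size (csf f B t)) (csf f B t').
Proof.
elim: t' => [|t' IH]; first by rewrite leqn0 => /eqP ->.
rewrite leq_eqVlt => /orP [/eqP -> | Hlt]; first by rewrite take_size.
rewrite /= takel_cat; first exact: IH.
rewrite (IH Hlt) size_take; exact: geq_minr.
Qed.

Lemma csf_size_mono (Sigma : finType) (M : TM Sigma) f B t t' :
  t <= t' -> size (@csf Sigma M f B t) <= size (csf f B t').
Proof.
move=> H; rewrite (csf_prefix f B H) size_take; exact: geq_minr.
Qed.

Lemma csf_same_size (Sigma : finType) (M : TM Sigma) f B t t' :
  t <= t' -> size (@csf Sigma M f B t') <= size (csf f B t) -> csf f B t' = csf f B t.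
Proof.
move=> H Hs; rewrite (csf_prefix f B H) take_oversize //.
Qed.

Lemma no_cross_side (Sigma : finType) (M : TM Sigma) (f : nat -> config M) B t :
  csf f B t.+1 = csf f B t -> side B (f t.+1) = side B (f t).
Proof.
rewrite /=; case: ifP => H.
  by move/(congr1 size); rewrite size_cat /= => E; exfalso; move: E; lia.
by move/negbFE/eqP: H.
Qed.

Lemma next_cross (Sigma : finType) (M : TM Sigma) (f : nat -> config M) B t T :
  t <= T -> size (csf f B t) < size (csf f B T) ->
  exists r, [/\ t <= r, r < T, (forall r', t <= r' -> r' <= r -> csf f B r' = csf f B t),
     side B (f r) != side B (f r.+1) & csf f B r.+1 = csf f B t ++ [:: info B (f r.+1)]].
Proof.
elim: T => [|T IH]; first by rewrite leqn0 => /eqP ->; rewrite ltnn.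
rewrite leq_eqVlt => /orP [/eqP -> | Hlt]; first by rewrite ltnn.
move=> Hs.
case: (ltnP (size (csf f B t)) (size (csf f B T))) => H2.
  have [r [H1 H3 H4 H5 H6]] := IH Hlt H2.
  by exists r; split => //; apply: ltnW.
have HT : csf f B T = csf f B t by apply: csf_same_size.
exists T; split => //.
- move=> r' H1 H3; apply: csf_same_size => //.
  by rewrite -HT; apply: csf_size_mono.
- move: Hs; rewrite /= HT; case: ifP => // _; by rewrite cats0 ltnn.
- move: Hs; rewrite /= HT; case: ifP => // _; by rewrite cats0 ltnn.
Qed.

Lemma sides_const (Sigma : finType) (M : TM Sigma) (f : nat -> config M) B t r :
  (forall r', t <= r' -> r' <= r -> csf f B r' = csf f B t) ->
  forall r', t <= r' -> r' <= r -> side B (f r') = side B (f t).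
Proof.
move=> H r'; elim: r' => [|r' IH].
  by rewrite leqn0 => /eqP ->.
rewrite leq_eqVlt => /orP [/eqP -> //| Htr] Hr.
have Htr' : t <= r' by [].
rewrite no_cross_side; first by apply: IH => //; apply: ltnW.
rewrite (H r'.+1) //; last by apply: ltnW. by rewrite (H r') //; apply: ltnW.
Qed.

Lemma passive_stable (Sigma : finType) (M : TM Sigma) (f : nat -> config M) B sg t s :
  traj f -> t <= s -> (forall r, t <= r -> r < s -> side B (f r) = sg) ->
  agree (fun i => (i <? B)%Z != sg) (f s) (f t).
Proof.
move=> Hf; elim: s => [|s IH]; first by rewrite leqn0 => /eqP -> _ i.
rewrite leq_eqVlt => /orP [/eqP -> //| Hts] Hside i Hi.
rewrite Hf step_off; first by apply: IH => // r H1 H2; apply: Hside => //; apply: ltnW.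
move=> E; move: Hi; rewrite E; have := Hside s Hts (ltnSn s); rewrite /side => ->.
by rewrite eqxx.
Qed.

Lemma cross_head (Sigma : finType) (M : TM Sigma) B (c : config M) :
  side B c != side B (step c) ->
  chead (step c) = (if side B (step c) then (B - 1)%Z else B).
Proof.
rewrite /side; have := step_head c.
case: (Z.ltb_spec (chead c) B); case: (Z.ltb_spec (chead (step c)) B) => //= *; lia.
Qed.

Definition onside (B : Z) (sg : bool) (i : Z) : bool := ((i <? B)%Z == sg).

Definition HalfInv (Sigma : finType) (M : TM Sigma) (B : Z) (sg : bool) (e : config M)
  (a p : nat -> config M) (ta tp Ta Tp : nat) (ce : seq (state M * bool)) :=
  [/\ ce = csf a B ta, ce = csf p B tp, ta <= Ta, tp <= Tp &
   [/\ side B e = sg, side B (p tp) = sg,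
     cstate e = cstate (a ta), chead e = chead (a ta) &
     agree (onside B sg) e (a ta) /\ agree (fun i => ~~ onside B sg i) e (p tp)]].

Lemma onsideN B sg i : ~~ onside B (~~ sg) i = onside B sg i.
Proof. by rewrite /onside; case: sg; case: (i <? B)%Z. Qed.

Lemma half_step (Sigma : finType) (M : TM Sigma) B sg (e : config M) (a p : nat -> config M)
  ta tp Ta Tp ce :
  traj a -> traj p -> halting (cstate (a Ta)) -> halting (cstate (p Tp)) ->
  csf a B Ta = csf p B Tp ->
  HalfInv B sg e a p ta tp Ta Tp ce -> ~~ halting (cstate e) ->
  (side B (step e) = sg /\
     HalfInv B sg (step e) a p ta.+1 tp Ta Tp
       (ce ++ (if side B e != side B (step e) then [:: info B (step e)] else [::]))) \/
  (side B (step e) = ~~ sg /\ exists tp', tp < tp' /\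
     HalfInv B (~~ sg) (step e) p a tp' ta.+1 Tp Ta
       (ce ++ (if side B e != side B (step e) then [:: info B (step e)] else [::]))).
Proof.
move=> Ha Hp HaT HpT Hfin [Hca Hcp Hta Htp [Hse Hsp Hst Hhd [Hag Hpg]]] Hnh.
have Hnha : ~~ halting (cstate (a ta)) by rewrite -Hst.
have Hta' : ta < Ta.
  rewrite ltnNge; apply/negP => H; move: Hnha.
  by rewrite (traj_halt Ha HaT H) HaT.
have HPe : onside B sg (chead e) by rewrite /onside -Hse.
have [Hst1 [Hhd1 Hag1]] := step_local Hst Hhd HPe Hag.
rewrite -Ha in Hst1 Hhd1 Hag1.
have Hsa1 : side B (step e) = side B (a ta.+1) by rewrite /side Hhd1.
have Hsa0 : side B e = side B (a ta) by rewrite /side Hhd.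
have Hpass : agree (fun i => ~~ onside B sg i) (step e) (p tp).
  move=> i Hi; rewrite step_off; first exact: Hpg.
  by move=> E; move: Hi; rewrite E HPe.
have Hcsa1 : csf a B ta.+1 = csf a B ta ++
   (if side B (a ta) != side B (a ta.+1) then [:: info B (a ta.+1)] else [::]) by [].
case Hs1: (side B (step e) == sg).
- move/eqP: Hs1 => Hs1; left; split => //.
  rewrite Hse Hs1 eqxx; split => //.
  + by rewrite /= cats0 -Hsa0 -Hsa1 Hse Hs1 eqxx -Hca cats0.
  + by rewrite /= cats0.
- have Hs1' : side B (step e) = ~~ sg by move: Hs1; case: (side B (step e)); case: (sg).
  right; split => //.
  have Hcr : side B e != side B (step e) by rewrite Hse Hs1'; case: (sg).
  rewrite Hcr.
  have Hinfo : info B (step e) = info B (a ta.+1) by rewrite /info Hst1 Hsa1.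
  have Hcsa : csf a B ta.+1 = ce ++ [:: info B (step e)].
    by rewrite Hcsa1 -Hsa0 -Hsa1 Hcr Hinfo -Hca.
  have Hsz : size (csf p B tp) < size (csf p B Tp).
    rewrite -Hfin -Hcp; apply: leq_trans (csf_size_mono a B Hta').
    by rewrite Hcsa size_cat addn1.
  have [r [H1 H2 H3 H4 H5]] := next_cross Htp Hsz.
  have Heqcs : csf p B r.+1 = csf a B ta.+1.
    rewrite (csf_prefix p B (H2 : r.+1 <= Tp)) (csf_prefix a B (Hta' : ta.+1 <= Ta)) Hfin.
    by rewrite H5 Hcsa -Hcp !size_cat.
  have Hinfo2 : info B (p r.+1) = info B (step e).
    move: Heqcs; rewrite H5 Hcsa -Hcp => /eqP; rewrite eqseq_cat // => /andP [_ /eqP E]; by rewrite /info; case: E => -> ->.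
  have Hsides := sides_const H3.
  have Hhe : chead (step e) = (if side B (step e) then (B - 1)%Z else B) by apply: cross_head.
  have Hhp : chead (p r.+1) = (if side B (p r.+1) then (B - 1)%Z else B).
    rewrite Hp; apply: cross_head; by rewrite -Hp.
  have Hside_p : side B (p r.+1) = side B (step e) by move: Hinfo2 => [_ ->].
  exists r.+1; split => //.
  split => //.
  + by rewrite Heqcs Hcsa.
  + split.
    * by [].
    * by rewrite -Hsa1.
    * by move: Hinfo2 => [-> _].
    * by rewrite Hhe Hhp Hside_p.
    * split.
      - move=> i Hi; rewrite Hpass; last by rewrite -onsideN negbK.
        have := @passive_stable _ _ p B sg tp r.+1 Hp (leqW H1) => Hps.
        symmetry; apply: Hps.
          by move=> r' Hr1 Hr2; rewrite (Hsides r' Hr1 Hr2) Hsp.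
        by move: Hi; rewrite /onside; case: (sg); case: (i <? B)%Z.
      - move=> i Hi; apply: Hag1; by rewrite -onsideN.
Qed.

Lemma init_left (Sigma : finType) (M : TM Sigma) (lu ru rv : seq Sigma) i :
  (i <? Z.of_nat (size lu))%Z -> ctape (init M (lu ++ rv)) i = ctape (init M (lu ++ ru)) i.
Proof.
move=> /Z.ltb_lt Hi /=.
case: (Z.leb_spec 0 i) => Hi0 //=.
have Hlt : (Z.to_nat i < size lu)%nat by apply/ltP; lia.
have -> : (i <? Z.of_nat (size (lu ++ rv)))%Z = true by apply/Z.ltb_lt; rewrite size_cat; lia.
have -> : (i <? Z.of_nat (size (lu ++ ru)))%Z = true by apply/Z.ltb_lt; rewrite size_cat; lia.
by rewrite !map_cat !nth_cat size_map Hlt.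
Qed.

Lemma init_right (Sigma : finType) (M : TM Sigma) (lu lv rv : seq Sigma) i :
  size lu = size lv -> ~~ (i <? Z.of_nat (size lu))%Z ->
  ctape (init M (lu ++ rv)) i = ctape (init M (lv ++ rv)) i.
Proof.
move=> Hs /negP Hi /=.
have Hi' : (Z.of_nat (size lu) <= i)%Z by case: (Z.ltb_spec i (Z.of_nat (size lu))) Hi => //.
have -> : (0 <=? i)%Z = true by apply/Z.leb_le; lia.
rewrite /= !size_cat Hs.
case: (i <? _)%Z => //.
have Hge : (size lu <= Z.to_nat i)%nat by apply/leP; lia.
by rewrite !map_cat !nth_cat !size_map -Hs ltnNge Hge.
Qed.

Lemma cut_paste (Sigma : finType) (M : TM Sigma) (lu ru lv rv : seq Sigma) T1 T2 :
  size lu = size lv ->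
  halted_by M (lu ++ ru) T1 -> halted_by M (lv ++ rv) T2 ->
  csf (run M (lu ++ ru)) (Z.of_nat (size lu)) T1 = csf (run M (lv ++ rv)) (Z.of_nat (size lu)) T2 ->
  exists T, halted_by M (lu ++ rv) T /\
    (cstate (run M (lu ++ rv) T) = cstate (run M (lu ++ ru) T1) \/
     cstate (run M (lu ++ rv) T) = cstate (run M (lv ++ rv) T2)).
Proof.
move=> Hsz H1 H2 Hcs.
set B := Z.of_nat (size lu).
set c := run M (lu ++ ru); set d := run M (lv ++ rv); set e := run M (lu ++ rv).
have Hc : traj c by []. have Hd : traj d by []. have He : traj e by [].
pose Inv t t1 t2 := (~~ halting (cstate (e t)) -> t <= t1 + t2) /\
  (if side B (e t) then HalfInv B true (e t) c d t1 t2 T1 T2 (csf e B t)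
   else HalfInv B false (e t) d c t2 t1 T2 T1 (csf e B t)).
have Hinv : forall t, exists t1 t2, Inv t t1 t2.
  elim=> [|t [t1 [t2 [Hm HI]]]].
    exists 0, 0; split => //.
    have Hs0 : side B (e 0) = side B (c 0) by [].
    have Hs1 : side B (e 0) = side B (d 0) by [].
    case Hs: (side B (e 0)); split => //; split => //.
    - split.
      + move=> i Hi; apply: init_left; by move: Hi; rewrite /onside; case: (i <? _)%Z.
      + move=> i Hi; apply: init_right => //; by move: Hi; rewrite /onside; case: (i <? _)%Z.
    - split.
      + move=> i Hi; apply: init_right => //; by move: Hi; rewrite /onside; case: (i <? _)%Z.
      + move=> i Hi; apply: init_left; by move: Hi; rewrite /onside; case: (i <? _)%Z.
  have Hcs' : csf e B t.+1 = csf e B t ++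
    (if side B (e t) != side B (step (e t)) then [:: info B (step (e t))] else [::]) by [].
  case Hh: (halting (cstate (e t))).
    exists t1, t2; split; first by rewrite He step_halt ?Hh.
    by rewrite Hcs' He step_halt ?Hh // eqxx cats0.
  move: HI; case Hs: (side B (e t)) => HI.
  - have [[Hs1 HI1]|[Hs1 [tp' [Hlt HI1]]]] := half_step Hc Hd H1 H2 Hcs HI (negbT Hh).
    + exists t1.+1, t2; split.
        move=> _; have := Hm (negbT Hh); rewrite addSn; done.
      by rewrite He Hs1 Hcs'.
    + exists t1.+1, tp'; split.
        move=> _; have := Hm (negbT Hh); lia.
      by rewrite He Hs1 Hcs'.
  - have [[Hs1 HI1]|[Hs1 [tp' [Hlt HI1]]]] := half_step Hd Hc H2 H1 (esym Hcs) HI (negbT Hh).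
    + exists t1, t2.+1; split.
        move=> _; have := Hm (negbT Hh); lia.
      by rewrite He Hs1 Hcs'.
    + exists tp', t2.+1; split.
        move=> _; have := Hm (negbT Hh); lia.
      by rewrite He Hs1 Hcs'.
have [t1 [t2 [Hm HI]]] := Hinv (T1 + T2).+1.
have Hb : t1 <= T1 /\ t2 <= T2.
  by move: HI; case: (side B _) => [[_ _ ? ? _]|[_ _ ? ? _]].
have Hhalt : halting (cstate (e (T1 + T2).+1)).
  apply/negPn/negP => /Hm; lia.
exists (T1 + T2).+1; split => //.
move: HI; case: (side B _) => [[_ _ Ht _ [_ _ Hst _ _]]|[_ _ Ht _ [_ _ Hst _ _]]].
- left; rewrite Hst.
  have Hct : halting (cstate (c t1)) by rewrite -Hst.
  by rewrite -(traj_halt Hc Hct Ht).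
- right; rewrite Hst.
  have Hct : halting (cstate (d t2)) by rewrite -Hst.
  by rewrite -(traj_halt Hd Hct Ht).
Qed.



Lemma sumn_map_add (A : Type) (f g : A -> nat) (s : seq A) :
  sumn [seq f x + g x | x <- s] = sumn [seq f x | x <- s] + sumn [seq g x | x <- s].
Proof. elim: s => //= x s ->; lia. Qed.

Lemma sumn_map_bool (A : Type) (P : A -> bool) (s : seq A) :
  sumn [seq nat_of_bool (P x) | x <- s] = count P s.
Proof. by elim: s => //= x s ->. Qed.

Lemma cross_count (Sigma : finType) (M : TM Sigma) (c : config M) (Bs : seq nat) :
  uniq Bs ->
  count (fun b => side (Z.of_nat b) c != side (Z.of_nat b) (step c)) Bs <= 1.
Proof.
move=> Hu.
have Hh := step_head c.
pose v := Z.to_nat (Z.max (chead c) (chead (step c))).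
apply: (@leq_trans (count (pred1 v) Bs)); last by rewrite count_uniq_mem //; case: (_ \in _).
apply: sub_count => b /=; rewrite /side.
case: (Z.ltb_spec (chead c) (Z.of_nat b)); case: (Z.ltb_spec (chead (step c)) (Z.of_nat b)) => //= H1 H2 _;
  apply/eqP; rewrite /v; lia.
Qed.

Lemma cross_sum (Sigma : finType) (M : TM Sigma) (f : nat -> config M) (Bs : seq nat) T :
  traj f -> uniq Bs ->
  sumn [seq size (csf f (Z.of_nat b) T) | b <- Bs] <= T.
Proof.
move=> Hf Hu; elim: T => [|T IH] /=; first by elim: Bs {Hu} => //.
have -> : [seq size (csf f (Z.of_nat b) T ++
     (if side (Z.of_nat b) (f T) != side (Z.of_nat b) (f T.+1)
      then [:: info (Z.of_nat b) (f T.+1)] else [::])) | b <- Bs] =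
  [seq size (csf f (Z.of_nat b) T) + nat_of_bool (side (Z.of_nat b) (f T) != side (Z.of_nat b) (f T.+1)) | b <- Bs].
  by apply: eq_map => b; rewrite size_cat; case: ifP.
rewrite sumn_map_add sumn_map_bool Hf.
have := cross_count (f T) Hu; lia.
Qed.

Lemma sumn_min (A : eqType) (g : A -> nat) (s : seq A) T :
  s != [::] -> sumn [seq g x | x <- s] <= T -> exists2 x, x \in s & size s * g x <= T.
Proof.
move=> Hne Hs.
suff [x Hx Hmin] : exists2 x, x \in s & forall y, y \in s -> g x <= g y.
  exists x => //; apply: leq_trans Hs.
  elim: s Hne Hmin {Hx} => // y s IH _ Hmin /=.
  rewrite mulSn; apply: leq_add; first by apply: Hmin; rewrite inE eqxx.
  case: s IH Hmin => [|z s] IH Hmin; first by rewrite mul0n.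
  by apply: IH => // w Hw; apply: Hmin; rewrite inE Hw orbT.
clear Hs; elim: s Hne  => // y s IH _.
case: s IH => [|z s] IH.
  by exists y; rewrite ?inE // => w; rewrite inE => /eqP ->.
have [x Hx Hm] := IH isT.
case: (leqP (g y) (g x)) => H.
- exists y; first by rewrite inE eqxx.
  move=> w; rewrite inE => /orP [/eqP -> //|/Hm]; exact: leq_trans.
- exists x; first by rewrite inE Hx orbT.
  move=> w; rewrite inE => /orP [/eqP -> |/Hm //]; exact: ltnW.
Qed.

Lemma pigeon (A B : eqType) (P : A -> B -> Prop) (X : seq A) (Y : seq B) :
  uniq X -> (forall x, x \in X -> exists2 y, y \in Y & P x y) ->
  (forall x x' y, x \in X -> x' \in X -> P x y -> P x' y -> x = x') ->
  size X <= size Y.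
Proof.
elim: X Y => // x X IH Y /= /andP [HxX Hu] Hex Hinj.
have [y Hy Hxy] := Hex x (mem_head _ _).
have HX : forall z, z \in X -> z \in x :: X by move=> z Hz; rewrite inE Hz orbT.
have Hs : size (filter (predC1 y) Y) < size Y.
  rewrite size_filter -(count_predC (predC1 y) Y).
  have : 0 < count (predC (predC1 y)) Y.
    by rewrite -has_count; apply/hasP; exists y => //=; rewrite eqxx.
  lia.
apply: leq_ltn_trans Hs.
apply: IH => //.
- move=> x' Hx'; have [y' Hy' Hxy'] := Hex x' (HX _ Hx').
  exists y' => //; rewrite mem_filter Hy' andbT /=.
  apply/eqP => E; subst y'.
  have E := Hinj x x' y (mem_head _ _) (HX _ Hx') Hxy Hxy'.
  by move: HxX; rewrite E Hx'.
- move=> x1 x2 y' H1 H2; apply: Hinj; exact: HX.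
Qed.



Lemma gmulVr (G : Type) (grp : group_on G) x : gmul grp x (ginv grp x) = gone grp.
Proof.
set y := ginv grp x; set z := ginv grp y.
transitivity (gmul grp (gmul grp z y) (gmul grp x y)); first by rewrite gmulV gmul1.
by rewrite -gmulA (gmulA grp y x y) gmulV gmul1 gmulV.
Qed.

Lemma gmul1r (G : Type) (grp : group_on G) x : gmul grp x (gone grp) = x.
Proof. by rewrite -(gmulV grp x) gmulA gmulVr gmul1. Qed.

Lemma gcancel_r (G : Type) (grp : group_on G) x y z :
  gmul grp x z = gmul grp y z -> x = y.
Proof.
move=> E; rewrite -(gmul1r grp x) -(gmul1r grp y) -(gmulVr grp z) !gmulA E //.
Qed.

Lemma geval_cat (G : Type) (grp : group_on G) k (s : 'I_k -> G) z1 z2 :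
  geval grp s (z1 ++ z2) = gmul grp (geval grp s z1) (geval grp s z2).
Proof.
elim: z1 => [|i z1 IH] /=; first by rewrite gmul1.
by rewrite IH gmulA.
Qed.

Definition invw k (iv : 'I_k -> 'I_k) (z : seq 'I_k) := rev (map iv z).

Lemma geval_inv (G : Type) (grp : group_on G) k (s : 'I_k -> G) iv z :
  (forall i, s (iv i) = ginv grp (s i)) ->
  geval grp s (z ++ invw iv z) = gone grp.
Proof.
move=> Hiv; elim: z => [|i z IH] //=.
rewrite /invw map_cons rev_cons -cats1 catA geval_cat -/(invw iv z) /=.
rewrite IH gmul1 Hiv gmul1r; exact: gmulVr.
Qed.

Lemma geval_inv_eq (G : Type) (grp : group_on G) k (s : 'I_k -> G) iv z1 z2 :
  (forall i, s (iv i) = ginv grp (s i)) ->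
  geval grp s (z1 ++ invw iv z2) = gone grp -> geval grp s z1 = geval grp s z2.
Proof.
move=> Hiv E; have E2 := @geval_inv _ grp _ s iv z2 Hiv.
rewrite geval_cat in E; rewrite geval_cat in E2.
apply: (@gcancel_r _ grp _ _ (geval grp s (invw iv z2))); by rewrite E E2.
Qed.



Definition allseqs (T : finType) (L : nat) : seq (seq T) :=
  flatten [seq [seq tval t | t : j.-tuple T] | j <- iota 0 L.+1].

Lemma allseqs_mem (T : finType) L (c : seq T) : size c <= L -> c \in allseqs T L.
Proof.
move=> H; apply/flatten_mapP; exists (size c); first by rewrite mem_iota /= add0n ltnS.
have -> : c = tval (in_tuple c) by [].
by apply: image_f.
Qed.

Lemma allseqs_size (T : finType) L : size (allseqs T L) <= (#|T|.+1) ^ L.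
Proof.
rewrite /allseqs; elim: L => [|L IH].
  by rewrite /= cats0 size_image card_tuple.
rewrite -[L.+2]addn1 iotaD map_cat flatten_cat size_cat /= cats0 size_image card_tuple.
rewrite add0n.
have H1 : #|T| ^ L.+1 <= #|T| * #|T|.+1 ^ L.
  rewrite expnS leq_mul2l; apply/orP; right; elim: (L) => // n IHn; rewrite !expnS leq_mul //.
rewrite [X in _ <= X]expnS mulSn.
move: IH H1; set a := size _; set b := _ ^ L; set c := #|T| ^ _ => IH H1.
exact: leq_add IH H1.
Qed.

Lemma size_undup_cat (T : eqType) (s1 s2 : seq T) :
  size (undup (s1 ++ s2)) <= size (undup s1) + size (undup s2).
Proof.
rewrite undup_cat size_cat leq_add2r size_filter; exact: count_size.
Qed.

Lemma undup_flatten (A : Type) (B : eqType) (f : A -> B) (ss : seq (seq A)) :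
  size (undup [seq f x | x <- flatten ss]) <= sumn [seq size (undup [seq f x | x <- s]) | s <- ss].
Proof.
elim: ss => //= s ss IH.
rewrite map_cat; apply: leq_trans (size_undup_cat _ _) _.
by rewrite leq_add2l.
Qed.

Definition Vj (G : Type) (grp : group_on G) k (s : 'I_k -> G) j : seq (classicT G) :=
  undup [seq (geval grp s w : classicT G) | w <- [seq tval t | t : j.-tuple 'I_k]].

Lemma growth_le (G : Type) (grp : group_on G) k (s : 'I_k -> G) m :
  growth grp s m <= sumn [seq size (Vj grp s j) | j <- iota 0 m.+1].
Proof.
rewrite /growth /words_upto; apply: leq_trans (undup_flatten _ _) _.
by rewrite -map_comp.
Qed.

Lemma sumn_le_const (A : Type) (f : A -> nat) (s : seq A) Z :
  (forall x, x \in map f s -> x <= Z) -> sumn [seq f x | x <- s] <= size s * Z.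
Proof.
elim: s => //= x s IH H; rewrite mulSn; apply: leq_add.
  by apply: H; rewrite inE eqxx.
by apply: IH => y Hy; apply: H; rewrite inE Hy orbT.
Qed.

Definition wz k (iv : 'I_k -> 'I_k) (a : 'I_k) m (x : seq 'I_k) :=
  (x ++ nseq m a) ++ invw iv (x ++ nseq m a).

Lemma wz_split k (iv : 'I_k -> 'I_k) a m x i : i <= m ->
  wz iv a m x = (x ++ nseq i a) ++ (nseq (m - i) a ++ invw iv (x ++ nseq m a)).
Proof.
move=> Hi; rewrite /wz.
have E : nseq m a = nseq i a ++ nseq (m - i) a by rewrite -nseqD subnKC.
by rewrite {1}E !catA.
Qed.

Lemma core (G : Type) (grp : group_on G) k (s : 'I_k -> G) (iv : 'I_k -> 'I_k)
  (Hiv : forall i, s (iv i) = ginv grp (s i)) (M : TM 'I_k)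
  (Hdec : decides M (WP grp s)) a m L j :
  0 < m ->
  (forall x : seq 'I_k, size x = j -> exists T, halted_by M (wz iv a m x) T /\ T <= m * L) ->
  size (Vj grp s j) <= m * (#|{: state M * bool}|.+1 ^ L).
Proof.
move=> Hm Hx.
set Bs := [seq j + i | i <- iota 1 m].
set Y := [seq (bb, c) | bb <- Bs, c <- allseqs {: state M * bool} L].
pose P (g : classicT G) (y : nat * seq (state M * bool)) : Prop :=
  exists x : seq 'I_k, [/\ size x = j, geval grp s x = g, j < y.1 <= j + m &
    exists T, halted_by M (wz iv a m x) T /\ csf (run M (wz iv a m x)) (Z.of_nat y.1) T = y.2].
have HBs : uniq Bs by rewrite map_inj_uniq ?iota_uniq // => u v /eqP; rewrite eqn_add2l => /eqP.
have HsBs : size Bs = m by rewrite size_map size_iota.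
have Hacc : forall x T, halted_by M (wz iv a m x) T -> cstate (run M (wz iv a m x) T) = qacc M.
  move=> x T HT; apply/((Hdec _).2 T HT); rewrite /WP /wz.
  exact: geval_inv.
apply: (@leq_trans (size Y)).
  apply: (@pigeon _ _ P) => //.
  - exact: undup_uniq.
  - move=> g; rewrite mem_undup => /mapP [w Hw ->].
    have Hsw : size w = j by case/imageP: Hw => t _ ->; rewrite size_tuple.
    have [T [HT HTL]] := Hx w Hsw.
    have Hsum := cross_sum (Bs := Bs) T (traj_run M (wz iv a m w)) HBs.
    have Hne : Bs != [::] by rewrite -size_eq0 HsBs -lt0n.
    have [bb Hbb Hsz] := sumn_min Hne Hsum.
    exists (bb, csf (run M (wz iv a m w)) (Z.of_nat bb) T).
      apply: allpairs_f => //; apply: allseqs_mem.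
      rewrite HsBs in Hsz; rewrite -(leq_pmul2l Hm); exact: leq_trans HTL.
    exists w; split => //.
      by move: Hbb => /mapP [i]; rewrite mem_iota /= => /andP [H1 H2] ->; lia.
    by exists T.
  - move=> g g' [bb c] _ _ [x [Hsx Hgx Hb [T [HT Hc]]]] [x' [Hsx' Hgx' _ [T' [HT' Hc']]]].
    rewrite -Hgx -Hgx' /=.
    simpl in Hb, Hc, Hc'.
    have Hi : bb - j <= m by lia.
    have Hbb : bb = size (x ++ nseq (bb - j) a) by rewrite size_cat size_nseq Hsx; lia.
    have Hbb' : bb = size (x' ++ nseq (bb - j) a) by rewrite size_cat size_nseq Hsx'; lia.
    move: (Hacc x T HT) (Hacc x' T' HT').
    rewrite (wz_split iv a x Hi) (wz_split iv a x' Hi) => Ha1 Ha2.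
    rewrite (wz_split iv a x Hi) in HT Hc; rewrite (wz_split iv a x' Hi) in HT' Hc'.
    set i := bb - j in Hbb Hbb' Ha1 Ha2 HT HT' Hc Hc'.
    have Hszeq : size (x ++ nseq i a) = size (x' ++ nseq i a) by rewrite -Hbb -Hbb'.
    have Hcc : csf (run M ((x ++ nseq i a) ++ nseq (m - i) a ++ invw iv (x ++ nseq m a)))
                 (Z.of_nat (size (x ++ nseq i a))) T =
               csf (run M ((x' ++ nseq i a) ++ nseq (m - i) a ++ invw iv (x' ++ nseq m a)))
                 (Z.of_nat (size (x ++ nseq i a))) T' by rewrite -Hbb Hc Hc'.
    have [T'' [HT'' Hst]] := cut_paste Hszeq HT HT' Hcc.
    have Hq : cstate (run M ((x ++ nseq i a) ++ nseq (m - i) a ++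
                 invw iv (x' ++ nseq m a)) T'') = qacc M.
      by case: Hst => ->.
    have := (Hdec _).2 T'' HT''; rewrite Hq => [[H _]].
    have := H erefl; rewrite /WP -catA (catA (nseq _ a)) -nseqD subnKC // catA => HW.
    have := geval_inv_eq Hiv HW; rewrite !geval_cat => E.
    exact: (gcancel_r E).
rewrite size_allpairs HsBs leq_mul2l; apply/orP; right.
exact: allseqs_size.
Qed.



Lemma INR_Z2N (z : Z) : (0 <= z)%Z -> INR (Z.to_nat z) = IZR z.
Proof. by move=> H; rewrite INR_IZR_INZ Z2Nat.id. Qed.

Lemma IZR_le_INR z : (IZR z <= INR (Z.to_nat z))%R.
Proof.
case: (Z.le_gt_cases 0 z) => H; first by rewrite INR_Z2N //; apply: Rle_refl.
have := IZR_lt _ _ H; have := pos_INR (Z.to_nat z); lra.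
Qed.

Lemma exists_big r : exists n : nat, (r <= INR n)%R.
Proof.
exists (Z.to_nat (up r)); have [H _] := archimed r; have := IZR_le_INR (up r); lra.
Qed.

Lemma npow_pos n a : 0 < n -> npow n a = Rpower (INR n) a.
Proof. by case: n. Qed.

Lemma undup_const (T : eqType) (s : seq T) c :
  (forall x, x \in s -> x = c) -> size (undup s) <= 1.
Proof.
move=> H; have -> : 1 = size [:: c] by [].
apply: uniq_leq_size; first exact: undup_uniq.
by move=> x; rewrite mem_undup => /H ->; rewrite inE.
Qed.

Lemma INR_expn q l : INR (q ^ l) = (INR q ^ l)%R.
Proof. elim: l => [|l IH] //; by rewrite expnS mult_INR IH /=. Qed.

Lemma INR_lt_nat m n : (INR m <= INR n)%R -> m <= n.
Proof. by move/INR_le/leP. Qed.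

Theorem mainTheorem5 (G : Type) (grp : group_on G) (k : nat) (s : 'I_k -> G)
  (Hsym : forall i : 'I_k, exists j : 'I_k, s j = ginv grp (s i))
  (Hgen : forall g : G, exists w : seq 'I_k, geval grp s w = g)
  (alpha : R) (Halpha : (0 < alpha <= 1)%R)
  (Hgrowth : dominates (growth grp s) (fun n => Rpower 2 (npow n alpha))) :
  ~ DTIME1_o (WP grp s) (fun n => npow n (1 + alpha)).
Proof.
move=> [M [Hdec Hlo]].
case: Hgrowth => C [HC Hdom].
have Hln2 : (0 < ln 2)%R by have := ln_lt_2; lra.
have Hk : 0 < k.
  case: (posnP k) => // Hk0; exfalso.
  have Hw : forall w : seq 'I_k, w = [::].
    by case=> // i; have := ltn_ord i; lia.
  have Hg : forall n, growth grp s n <= 1.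
    move=> n; apply: undup_const (gone grp : classicT G) _ => x /mapP [w _ ->].
    by rewrite (Hw w).
  have := Hdom 1%nat; rewrite /at_real /=.
  have -> : Rpower 1 alpha = 1%R by rewrite /Rpower ln_1 Rmult_0_r exp_0.
  rewrite Rpower_1; last lra.
  have := Hg (Z.to_nat (Int_part (C * 1))) => /leP /le_INR /=; lra.
set a : 'I_k := Ordinal Hk.
have [iv Hiv] : exists iv : 'I_k -> 'I_k, forall i, s (iv i) = ginv grp (s i).
  exists (fun i => proj1_sig (constructive_indefinite_description _ (Hsym i))).
  by move=> i; case: (constructive_indefinite_description _ (Hsym i)).
set Q := #|{: state M * bool}|.+1.
have HQ : (1 < INR Q)%R.
  have : 0 < #|{: state M * bool}| by apply/card_gt0P; exists (q0 M, true).
  rewrite /Q => H; rewrite S_INR; have := lt_INR 0 _ (ltP H); simpl; lra.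
set lnQ := ln (INR Q).
have HlnQ : (0 < lnQ)%R by rewrite /lnQ -ln_1; apply: ln_increasing; lra.
set D := Rpower C alpha.
have HD : (0 < D)%R by apply: Rpower_gt0.
set eps := (ln 2 / (32 * D * lnQ))%R.
have Heps : (0 < eps)%R by apply: Rdiv_lt_0_compat => //; apply: Rmult_lt_0_compat => //; lra.
have [N0 HN0] := Hlo eps Heps.
have [X [HX1 HX]] := eventually_big alpha (ln 2 / (2 * D)) lnQ (proj1 Halpha) (Rdiv_lt_0_compat _ _ Hln2 (Rmult_lt_0_compat _ _ Rlt_0_2 HD)).
have [n' Hn'] := exists_big ((X + INR N0 + 2) / C).
set n := n'.+1.
have Hn1 : (1 <= INR n)%R by rewrite /n S_INR; have := pos_INR n'; lra.
have HCn : (X + INR N0 + 2 <= C * INR n)%R.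
  have : ((X + INR N0 + 2) / C <= INR n)%R by rewrite /n S_INR; lra.
  move=> H; apply (Rmult_le_compat_l C) in H; last lra.
  by replace (C * ((X + INR N0 + 2) / C))%R with (X + INR N0 + 2)%R in H by (field; lra).
set m := Z.to_nat (Int_part (C * INR n)).
have [Hip1 Hip2] := base_Int_part (C * INR n).
have Hip0 : (0 <= Int_part (C * INR n))%Z.
  have : (-1 < Int_part (C * INR n))%Z by apply: lt_IZR; have := pos_INR N0; lra.
  lia.
have Hm : INR m = IZR (Int_part (C * INR n)) by rewrite /m INR_Z2N.
have HmC : (INR m <= C * INR n)%R by lra.
have HmX : (X + INR N0 + 1 <= INR m)%R by lra.
have Hm0 : 0 < m by apply/ltP/INR_lt; simpl; have := pos_INR N0; lra.
have HmN0 : N0 <= m by apply: INR_lt_nat; lra.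
have Hdomn : (Rpower 2 (Rpower (INR n) alpha) <= INR (growth grp s m))%R := Hdom n.
set ma := Rpower (INR m) alpha.
have Hma : (0 < ma)%R by apply: Rpower_gt0.
set L := Z.to_nat (up (16 * eps * ma)).
have [Hup1 Hup2] := archimed (16 * eps * ma).
have HL : INR L = IZR (up (16 * eps * ma)).
  rewrite /L INR_Z2N //; apply: Z.lt_le_incl; apply: lt_0_IZR.
  have : (0 < 16 * eps * ma)%R by apply: Rmult_lt_0_compat => //; lra.
  lra.
have HmR : (0 < INR m)%R by apply: lt_0_INR; apply/ltP.
have HT : forall x : seq 'I_k, size x <= m -> exists T, halted_by M (wz iv a m x) T /\ T <= m * L.
  move=> x Hx.
  have Hsz : size (wz iv a m x) = (size x + m) + (size x + m).
    by rewrite /wz /invw size_cat size_rev size_map size_cat size_nseq.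
  have Hge : N0 <= size (wz iv a m x) by rewrite Hsz; lia.
  have [T [HT1 HT2]] := HN0 (wz iv a m x) Hge.
  exists T; split => //.
  apply: INR_lt_nat.
  apply: Rle_trans HT1 _.
  rewrite npow_pos; last by rewrite Hsz; lia.
  have HN : (0 < INR (size (wz iv a m x)) <= 4 * INR m)%R.
    split; first by apply: lt_0_INR; apply/ltP; rewrite Hsz; lia.
    have : size (wz iv a m x) <= 4 * m by rewrite Hsz; lia.
    move/leP/le_INR; rewrite mult_INR /= => H; lra.
  have H1 := Rle_Rpower_l _ _ (1 + alpha) ltac:(lra) HN.
  rewrite -Rpower_mult_distr in H1; [|lra|lra].
  have H4 : (Rpower 4 (1 + alpha) <= 16)%R.
    have H42 : Rpower 4 2 = 16%R.
      replace 2%R with (INR 2) by (simpl; lra).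
      rewrite Rpower_pow; [simpl; lra | lra].
    rewrite -H42; apply: Rle_Rpower; lra.
  have Hm1 : Rpower (INR m) (1 + alpha) = (INR m * ma)%R by rewrite Rpower_plus Rpower_1.
  rewrite Hm1 in H1.
  have Hprod : (0 <= INR m * ma)%R by apply: Rlt_le; apply: Rmult_lt_0_compat.
  rewrite mult_INR HL.
  have : (eps * (Rpower 4 (1 + alpha) * (INR m * ma)) <= eps * (16 * (INR m * ma)))%R.
    apply: Rmult_le_compat_l; first lra.
    by apply: Rmult_le_compat_r.
  have : (INR m * (16 * eps * ma) <= INR m * IZR (up (16 * eps * ma)))%R.
    by apply: Rmult_le_compat_l; lra.
  have : (eps * Rpower (INR (size (wz iv a m x))) (1 + alpha) <=
          eps * (Rpower 4 (1 + alpha) * (INR m * ma)))%R.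
    by apply: Rmult_le_compat_l; lra.
  have E : (eps * (16 * (INR m * ma)) = INR m * (16 * eps * ma))%R by ring.
  move=> Ha Hb Hc; rewrite -E in Hb; apply: Rle_trans Ha _; apply: Rle_trans Hc Hb.
have Hcore : forall j, j <= m -> size (Vj grp s j) <= m * Q ^ L.
  move=> j Hj; apply: (@core _ grp _ s iv Hiv M Hdec a m L j Hm0) => x Hx.
  by apply: HT; rewrite Hx.
have Hgr : growth grp s m <= m.+1 * (m * Q ^ L).
  apply: leq_trans (growth_le grp s m) _.
  rewrite -{2}(size_iota 0 m.+1); apply: sumn_le_const => y /mapP [j Hj ->].
  by apply: Hcore; rewrite mem_iota in Hj; lia.
have HgrR : (Rpower 2 (Rpower (INR n) alpha) <= (INR m + 1) * (INR m * INR Q ^ L))%R.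
  apply: Rle_trans Hdomn _.
  have := le_INR _ _ (leP Hgr); rewrite !mult_INR INR_expn S_INR; done.
have HQ0 : (0 < INR Q)%R by lra.
have HQL : (0 < INR Q ^ L)%R by apply: pow_lt.
set P := ((INR m + 1) * (INR m * INR Q ^ L))%R.
have HP0 : (0 < P)%R by rewrite /P; apply: Rmult_lt_0_compat; [lra | apply: Rmult_lt_0_compat].
have HlnP : ln P = (ln (INR m + 1) + ln (INR m) + INR L * lnQ)%R.
  rewrite /P ln_mult; [|lra|by apply: Rmult_lt_0_compat].
  by rewrite ln_mult // ln_pow // Rplus_assoc.
have Hlnm : (ln (INR m) <= ln (INR m + 1))%R by apply: ln_le'; lra.
have HLle : (INR L <= 16 * eps * ma + 1)%R by rewrite HL; lra.
have HLq : (INR L * lnQ <= (16 * eps * ma + 1) * lnQ)%R by apply: Rmult_le_compat_r; lra.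
have Heq : ((16 * eps * ma + 1) * lnQ = ln 2 / (2 * D) * ma + lnQ)%R.
  rewrite /eps; field; lra.
have HXm := HX (INR m) ltac:(have := pos_INR N0; lra).
have Hmad : (ma <= D * Rpower (INR n) alpha)%R.
  rewrite /ma /D Rpower_mult_distr; [|lra|lra].
  apply: Rle_Rpower_l; lra.
have Hfin : (ln 2 / (2 * D) * ma + ln 2 / (2 * D) * ma <= ln 2 * Rpower (INR n) alpha)%R.
  have -> : (ln 2 / (2 * D) * ma + ln 2 / (2 * D) * ma = ln 2 / D * ma)%R by field; lra.
  have -> : (ln 2 * Rpower (INR n) alpha = ln 2 / D * (D * Rpower (INR n) alpha))%R by field; lra.
  apply: Rmult_le_compat_l => //; apply: Rlt_le; apply: Rdiv_lt_0_compat => //.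
have HlnP2 : (ln P < Rpower (INR n) alpha * ln 2)%R.
  rewrite Rmult_comm HlnP; rewrite Heq in HLq; rewrite -/ma in HXm; lra.
have : (P < Rpower 2 (Rpower (INR n) alpha))%R.
  rewrite -(exp_ln P) // /Rpower; exact: exp_increasing.
rewrite /P; lra.
Qed.
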